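(* For every $k\ge2$, $n\ge0$ and nonnegative integers $m_1,\dots,m_k$, $$\mathcal D_k(m_1,\dots,m_k;n)=\sum_{t_1,\dots,t_{k-1}\ge0}\mathcal D^{ss}_k(m_1+2t_1,\dots,m_{k-1}+2t_{k-1},m_k;n).$$
   Context: A partition is a finite nonincreasing sequence $\lambda=(\lambda_1,\dots,\lambda_r)$ of positive integers (possibly empty); $l(\lambda)=r$, $|\lambda|=\sum\lambda_i$, $\lambda_1$ the largest part. Let $k\ge1$. A $k$-marked Durfee symbol of $n$ is an array $\eta=\begin{pmatrix}\alpha^k,&\dots,&\alpha^1\\ \beta^k,&\dots,&\beta^1\end{pmatrix}_D$ consisting of an integer $D\ge0$ and $2k$ partitions $\alpha^i,\beta^i$ with $\sum_{i=1}^k(|\alpha^i|+|\beta^i|)+D^2=n$, such that: (1) $\alpha^i$ is nonempty for $1\le i<k$; (2) for $1\le i<k$ every part of $\beta^i$ is $\le\alpha^i_1$, and for $2\le i\le k$ every part of $\alpha^i$ and every part of $\beta^i$ is $\ge\alpha^{i-1}_1$; (3) all parts of $\alpha^k$ and $\beta^k$ are $\le D$. The pair $(\alpha^i,\beta^i)$ is the $i$th vector. The $i$th rank is $\rho_i(\eta)=l(\alpha^i)-l(\beta^i)-1$ for $1\le i<k$ and $\rho_k(\eta)=l(\alpha^k)-l(\beta^k)$. $\mathcal D_k(m_1,\dots,m_k;n)$ is the number of $k$-marked Durfee symbols of $n$ with $\rho_i=m_i$ for all $i$. A pair of partitions $(\alpha,\beta)$ is strict shifted if $l(\alpha)>l(\beta)$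 and $\alpha_{i+1}>\beta_i$ for $1\le i\le l(\beta)$. A $k$-marked Durfee symbol is strict shifted if each vector $(\alpha^i,\beta^i)$, $1\le i\le k-1$, is strict shifted; $\mathcal D^{ss}_k(m_1,\dots,m_k;n)$ is the number of $k$-marked strict shifted Durfee symbols of $n$ with $i$th rank $m_i$ for all $i$. *)

(* Defs.v *)
From mathcomp Require Import all_boot all_order all_algebra.
Set Implicit Arguments. Unset Strict Implicit. Unset Printing Implicit Defensive.
Import GRing.Theory Num.Theory.

Definition is_partition (l : seq nat) : bool :=
  sorted geq l && all (fun x => 0 < x) l.

(* A k-marked Durfee symbol is represented as a pair (D, v) where
   v = [:: (alpha^1, beta^1); ...; (alpha^k, beta^k)]  (list position i-1
   holds the i-th vector). *)
Definition symbol := (nat * seq (seq nat * seq nat))%type.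

Definition alphai (s : symbol) (i : nat) : seq nat := (nth ([::], [::]) s.2 i).1.
Definition betai  (s : symbol) (i : nat) : seq nat := (nth ([::], [::]) s.2 i).2.

Definition lpart (l : seq nat) : nat := head 0 l.

(* s is a k-marked Durfee symbol of n (0-based indices i = paper index - 1) *)
Definition is_kDurfee (k n : nat) (s : symbol) : bool :=
  let D := s.1 in let v := s.2 in
  [&& size v == k,
      all (fun p => is_partition p.1 && is_partition p.2) v,
      sumn [seq sumn p.1 + sumn p.2 | p <- v] + D ^ 2 == n,
      (* (1) and first half of (2): for 1 <= i < k *)
      all (fun i => (alphai s i != [::]) &&
                    all (fun x => x <= lpart (alphai s i)) (betai s i))
          (iota 0 k.-1),
      (* second half of (2): for 2 <= i <= k *)
      all (fun i => all (fun x => lpart (alphai s i.-1) <= x)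
                        (alphai s i ++ betai s i))
          (iota 1 k.-1)
    &
      all (fun x => x <= D) (alphai s k.-1 ++ betai s k.-1)].

(* i-th rank (0-based index i, i.e. rho_{i+1}) *)
Definition rank (k : nat) (s : symbol) (i : nat) : int :=
  if i < k.-1 then (Posz (size (alphai s i)) - Posz (size (betai s i)) - 1)%R
  else (Posz (size (alphai s i)) - Posz (size (betai s i)))%R.

Definition has_ranks (k : nat) (ms : seq int) (s : symbol) : bool :=
  all (fun i => rank k s i == nth (Posz 0) ms i) (iota 0 k).

Definition strict_shifted (a b : seq nat) : bool :=
  (size b < size a) && all (fun j => nth 0 b j < nth 0 a j.+1) (iota 0 (size b)).

Definition is_strict_shifted (k : nat) (s : symbol) : bool :=
  all (fun i => strict_shifted (alphai s i) (betai s i)) (iota 0 k.-1).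

(* Finite candidate enumeration (a superset of all symbols of n). *)
Fixpoint seqs_len (l B : nat) : seq (seq nat) :=
  if l is l'.+1 then [seq x :: t | x <- iota 1 B, t <- seqs_len l' B]
  else [:: [::]].

(* every partition of size <= n has length <= n and parts in 1..n *)
Definition cand_parts (n : nat) : seq (seq nat) :=
  flatten [seq seqs_len l n | l <- iota 0 n.+1].

Fixpoint cand_vecs (k n : nat) : seq (seq (seq nat * seq nat)) :=
  if k is k'.+1 then
    [seq p :: w | p <- [seq (a, b) | a <- cand_parts n, b <- cand_parts n],
                  w <- cand_vecs k' n]
  else [:: [::]].

Definition cand_symbols (k n : nat) : seq symbol :=
  [seq (D, v) | D <- iota 0 n.+1, v <- cand_vecs k n].

Definition Dk (k : nat) (ms : seq int) (n : nat) : nat :=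
  size (undup [seq s <- cand_symbols k n | is_kDurfee k n s && has_ranks k ms s]).

Definition Dss (k : nat) (ms : seq int) (n : nat) : nat :=
  size (undup [seq s <- cand_symbols k n |
                 [&& is_kDurfee k n s, is_strict_shifted k s & has_ranks k ms s]]).

Definition shift_ranks (k : nat) (m t : seq nat) : seq int :=
  mkseq (fun i => if i < k.-1 then Posz (nth 0 m i + 2 * nth 0 t i)
                  else Posz (nth 0 m i)) k.

(* Main.v *)
From Stdlib Require Import ZArith Lia.
Require Import Defs.
From mathcomp Require Import all_boot all_order all_algebra.
Set Implicit Arguments. Unset Strict Implicit. Unset Printing Implicit Defensive.
Delimit Scope Z_scope with ZZ.

Lemma geq_tot : total geq. Proof. by move=> x y; rewrite /geq /= orbC leq_total. Qed.
Lemma geq_tr : transitive geq. Proof. by move=> x y z /= h1 h2; apply: leq_trans h2 h1. Qed.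
Lemma geq_asym : antisymmetric geq.
Proof. by move=> x y /andP[/= h1 h2]; apply/eqP; rewrite eqn_leq h1 h2. Qed.

Definition cgt (l : seq nat) w := count (fun x => w < x) l.
Definition cge (l : seq nat) w := count (fun x => w <= x) l.

Lemma cgt_nth l w j : sorted geq l -> (j < cgt l w) = (w < nth 0 l j).
Proof.
elim: l j => [|x l IH] j /=; first by rewrite nth_nil.
move=> hs; have hs' : sorted geq l by apply: (path_sorted hs).
have hall : all (geq x) l by move: hs; rewrite path_sortedE //; [case/andP|exact: geq_tr].
case: (ltnP w x) => hwx /=.
  case: j => [|j] //=; rewrite add1n ltnS; exact: IH.
have c0 : cgt l w = 0.
  apply/eqP; rewrite -leqn0 leqNgt -has_count; apply/hasP => [[y yl]].
  by move: (allP hall y yl) => /= hyx hwy; move: (leq_ltn_trans hwx (leq_trans hwy hyx)); rewrite ltnn.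
rewrite c0 ltn0; apply/esym/negbTE; rewrite -leqNgt.
case: j => [|j] //=; case: (ltnP j (size l)) => hj; last by rewrite nth_default.
by apply: leq_trans hwx; apply: (allP hall); apply: mem_nth.
Qed.

Open Scope Z_scope.
Fixpoint minz (g : nat -> Z) (N : nat) : Z :=
  if N is N'.+1 then Z.min (g N) (minz g N') else 0.

Lemma minz_le0 g N : minz g N <= 0.
Proof. elim: N => [|N IH] /=; lia. Qed.

Lemma minz_le g N w : (1 <= w <= N)%N -> minz g N <= g w.
Proof.
elim: N => [|N IH] /=; first by case/andP=> h1 h2; move: (leq_trans h1 h2).
case/andP=> h1 h2; rewrite leq_eqVlt in h2; case/orP: h2 => [/eqP->|h2]; first lia.
have := IH (introT andP (conj h1 h2)); lia.
Qed.

Lemma minz_ge g N m : m <= 0 -> (forall w, (1 <= w <= N)%N -> m <= g w) -> m <= minz g N.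
Proof.
move=> h0; elim: N => [|N IH] /= h; first exact: h0.
have h1 := h N.+1 (leqnn _); have h2 : m <= minz g N.
  by apply: IH => w /andP[a b]; apply: h; rewrite a /= ltnW.
lia.
Qed.

Lemma minz_att g N : minz g N = 0 \/ exists w, (1 <= w <= N)%N /\ g w = minz g N.
Proof.
elim: N => [|N [IH|[w [hw IH]]]] /=; [by left| |].
  case: (Z.le_gt_cases (g N.+1) 0) => h; last by left; lia.
  by right; exists N.+1; split; [rewrite /= leqnn|lia].
case: (Z.le_gt_cases (g N.+1) (minz g N)) => h.
  by right; exists N.+1; split; [rewrite /= leqnn|lia].
right; exists w; split; last lia.
by case/andP: hw => -> /= /leqW.
Qed.

Lemma minz_char g N m : m <= 0 -> (forall w, (1 <= w <= N)%N -> m <= g w) ->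
  (m = 0 \/ exists w, (1 <= w <= N)%N /\ g w = m) -> minz g N = m.
Proof.
move=> h0 h1 h2; have := minz_ge h0 h1; have := @minz_le0 g N.
case: h2 => [->|[w [hw <-]]]; first lia.
by have := minz_le hw (g:=g); lia.
Qed.
Close Scope Z_scope.

Fixpoint lastv (P : pred nat) (N : nat) : nat :=
  if N is N'.+1 then (if P N then N else lastv P N') else 0.

Lemma lastv_spec (P : pred nat) N : (exists w, 1 <= w <= N /\ P w) ->
  [/\ 1 <= lastv P N <= N, P (lastv P N) & forall w, lastv P N < w <= N -> ~~ P w].
Proof.
elim: N => [|N IH] [w [hw hP]] /=; first by case/andP: hw => h1 h2; move: (leq_trans h1 h2).
case: ifP => hN.
  split=> // [|u /andP[h1 h2]]; first by rewrite leqnn.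
  by move: (leq_ltn_trans h2 h1); rewrite ltnn.
have hw' : w <= N.
  case/andP: hw => _; rewrite leq_eqVlt => /orP[/eqP ew|] //.
  by move: hN; rewrite -ew hP.
case: IH; first by exists w; split=> //; case/andP: hw => -> _.
move=> /andP[h1 h2] h3 h4; split=> //; first by rewrite h1 /= leqW.
move=> u /andP[hu1 hu2]; rewrite leq_eqVlt in hu2; case/orP: hu2 => [/eqP [->]|hu2].
  by rewrite hN.
by apply: h4; rewrite hu1.
Qed.

Fixpoint firstv (P : pred nat) (N : nat) : nat :=
  if N is N'.+1 then (if has P (iota 1 N') then firstv P N' else N) else 0.

Lemma firstv_spec (P : pred nat) N : (exists w, 1 <= w <= N /\ P w) ->
  [/\ 1 <= firstv P N <= N, P (firstv P N) & forall w, 1 <= w < firstv P N -> ~~ P w].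
Proof.
elim: N => [|N IH] [w [hw hP]] /=; first by case/andP: hw => h1 h2; move: (leq_trans h1 h2).
case: ifP => hN.
  case/hasP: hN => u; rewrite mem_iota add1n => /andP[hu1 hu2] Pu.
  case: IH; first by exists u; rewrite hu1 /= -ltnS.
  by move=> /andP[h1 h2] h3 h4; split=> //; rewrite h1 leqW.
split=> //.
  case/andP: hw => h1 h2; rewrite leqnn andbT; exact: leq_trans h1 h2.
  case/andP: hw => h1 h2; rewrite leq_eqVlt in h2; case/orP: h2 => [/eqP[<-]|h2] //.
  by move: hN; have -> : has P (iota 1 N) by apply/hasP; exists w; rewrite // mem_iota add1n h1 -ltnS.
move=> u /andP[h1 h2]; apply/negP => Pu; move: hN.
by have -> : has P (iota 1 N) by apply/hasP; exists u; rewrite // mem_iota add1n h1.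
Qed.

Definition vpair := (seq nat * seq nat)%type.
Definition pv (p : vpair) : bool :=
  [&& is_partition p.1, is_partition p.2, p.1 != [::] & all (fun x => x <= head 0 p.1) p.2].

Definition bot (p : vpair) (w : nat) : Z :=
  Z.sub (Z.of_nat (cgt (behead p.1) w)) (Z.of_nat (cge p.2 w)).
Definition Mp (p : vpair) := minz (bot p) (head 0 p.1).
Definition vE (p : vpair) := lastv (fun w => Z.eqb (bot p w) (Mp p)) (head 0 p.1).
Definition vF (p : vpair) := firstv (fun w => Z.eqb (bot p w) (Mp p)) (head 0 p.1).
Definition ep (p : vpair) : vpair :=
  (head 0 p.1 :: sort geq (vE p :: behead p.1), rem (vE p) p.2).
Definition fp (p : vpair) : vpair :=
  (head 0 p.1 :: rem (vF p) (behead p.1), sort geq (vF p :: p.2)).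

Lemma cge_split l v : cge l v = cgt l v + count_mem v l.
Proof.
elim: l => [|x l IH] //=; rewrite IH /cgt /=.
case: (ltngtP v x) => h /=; rewrite !add0n; [by rewrite addnA|by []|by rewrite addnCA].
Qed.

Lemma cgeS l v : cge l v.+1 = cgt l v. Proof. by []. Qed.

Lemma cge_pos l v : all (fun x => 0 < x) l -> v <= 1 -> cge l v = size l.
Proof.
move=> hl hv; rewrite /cge -count_predT; apply: eq_in_count => x hx /=.
by apply: leq_trans hv (allP hl x hx).
Qed.

Lemma cgt_big l v : all (fun x => x <= v) l -> cgt l v = 0.
Proof.
move=> hl; apply/eqP; rewrite -leqn0 leqNgt -has_count; apply/hasP => [[x hx]] /=.
by rewrite ltnNge (allP hl x hx).
Qed.

Lemma pvE a A B : pv (a :: A, B) =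
  [&& sorted geq (a :: A), all (fun x => 0 < x) (a :: A), sorted geq B, all (fun x => 0 < x) B
   & all (fun x => x <= a) B].
Proof.
rewrite /pv /is_partition /=.
by rewrite !andbA.
Qed.

Lemma sorted_le a A : sorted geq (a :: A) -> all (fun x => x <= a) A.
Proof. rewrite /= path_sortedE; [by case/andP|exact: geq_tr]. Qed.

Lemma pv_cons p : pv p -> exists a A B, p = (a :: A, B).
Proof. case: p => [[|a A] B]; first by rewrite /pv /= !andbF. by move=> _; exists a, A, B. Qed.

Lemma bot_ep (a : nat) (A B : seq nat) (v w : nat) : v \in B ->
  bot (a :: sort geq (v :: A), rem v B) w =
  Z.add (Z.add (bot (a :: A, B) w) (if w < v then Zpos xH else Z0)) (if w <= v then Zpos xH else Z0).
Proof.
move=> hv; rewrite /bot /=.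
have h1 : cgt (sort geq (v :: A)) w = (w < v) + cgt A w by rewrite /cgt count_sort.
have h2 : cge B w = (w <= v) + cge (rem v B) w.
  by rewrite /cge (permP (perm_to_rem hv)).
rewrite h1 h2; case: (w < v); case: (w <= v); rewrite ?add1n ?add0n; lia.
Qed.

Lemma bot_fp (a : nat) (A B : seq nat) (v w : nat) : v \in A ->
  bot (a :: rem v A, sort geq (v :: B)) w =
  Z.sub (Z.sub (bot (a :: A, B) w) (if w < v then Zpos xH else Z0)) (if w <= v then Zpos xH else Z0).
Proof.
move=> hv; rewrite /bot /=.
have h1 : cge (sort geq (v :: B)) w = (w <= v) + cge B w by rewrite /cge count_sort.
have h2 : cgt A w = (w < v) + cgt (rem v A) w.
  by rewrite /cgt (permP (perm_to_rem hv)).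
rewrite h1 h2; case: (w < v); case: (w <= v); rewrite ?add1n ?add0n; lia.
Qed.

Ltac nlia := rewrite -?plusE -?minusE -?multE; lia.

Lemma all_rem (P : pred nat) x s : all P s -> all P (rem x s).
Proof. by move=> h; apply/allP => y hy; apply: (allP h); apply: mem_rem hy. Qed.

Lemma cnt0 (v : nat) (l : seq nat) : v \notin l -> count_mem v l = 0.
Proof. by move/count_memPn. Qed.

Lemma ep_spec (a : nat) (A B : seq nat) : pv (a :: A, B) -> (Mp (a :: A, B) < 0)%ZZ ->
  [/\ 1 <= vE (a :: A, B) <= a, bot (a :: A, B) (vE (a :: A, B)) = Mp (a :: A, B),
      (forall w, vE (a :: A, B) < w <= a -> (Mp (a :: A, B) < bot (a :: A, B) w)%ZZ)
    & vE (a :: A, B) \in B].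
Proof.
move=> hp hM; set p := (a :: A, B); set M := Mp p.
have hpE := hp; rewrite pvE in hpE; case/and5P: hpE => hsA hpA hsB hpB hBa.
have hAa := sorted_le hsA.
case: (minz_att (bot p) a) => [hz|[w [hw hbw]]]; first by rewrite /M /Mp /= hz in hM; lia.
have [] := @lastv_spec (fun w => Z.eqb (bot p w) M) a.
  by exists w; split=> //; apply/Z.eqb_eq; rewrite hbw.
rewrite -/(vE p) => hv /Z.eqb_eq hbv hlast.
have hgt : forall u, vE p < u <= a -> (M < bot p u)%ZZ.
  move=> u hu; have hle : (M <= bot p u)%ZZ.
    by apply: minz_le; case/andP: hu => h1 h2; rewrite h2 andbT; apply: leq_ltn_trans h1.
  by have := hlast u hu; case: Z.eqb_spec => // hne _; lia.
split=> //.
apply/negPn/negP => hn; have c0 := cnt0 hn.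
case/andP: hv => hv1; rewrite leq_eqVlt => /orP[/eqP hva|hva].
  have : bot p (vE p) = 0%ZZ.
    rewrite /bot /= hva cgt_big // cge_split cgt_big //.
    by rewrite -hva c0.
  move: hM; rewrite -/p -/M; lia.
have := hgt (vE p).+1; rewrite ltnSn hva => /(_ isT).
rewrite /bot /= -hbv /bot /= cgeS (cge_split B) c0 addn0.
have : cgt A (vE p).+1 <= cgt A (vE p).
  by have -> : cgt A (vE p) = cge A (vE p).+1 by []; rewrite cge_split leq_addr.
move/leP; lia.
Qed.

Lemma fp_spec (a : nat) (A B : seq nat) : pv (a :: A, B) -> size B + 2 <= size A ->
  [/\ 1 <= vF (a :: A, B) <= a, bot (a :: A, B) (vF (a :: A, B)) = Mp (a :: A, B),
      (forall w, 1 <= w < vF (a :: A, B) -> (Mp (a :: A, B) < bot (a :: A, B) w)%ZZ)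
    & vF (a :: A, B) \in A].
Proof.
move=> hp hsz; set p := (a :: A, B); set M := Mp p.
have hpE := hp; rewrite pvE in hpE; case/and5P: hpE => hsA hpA hsB hpB hBa.
have hAa := sorted_le hsA.
have ha : 0 < a by case/andP: hpA.
have hM0 : (M <= 0)%ZZ by apply: minz_le0.
have hex : exists w, 1 <= w <= a /\ bot p w = M.
  case: (minz_att (bot p) a) => [hz|[w [hw hbw]]]; last by exists w.
  exists a; split; first by rewrite ha leqnn.
  have : (M <= bot p a)%ZZ by apply: minz_le; rewrite ha leqnn.
  rewrite /M /Mp /= hz /bot /= cgt_big //; lia.
have [] := @firstv_spec (fun w => Z.eqb (bot p w) M) a.
  by case: hex => w [hw hbw]; exists w; split=> //; apply/Z.eqb_eq.
rewrite -/(vF p) => hv /Z.eqb_eq hbv hfirst.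
have hgt : forall u, 1 <= u < vF p -> (M < bot p u)%ZZ.
  move=> u hu; have hle : (M <= bot p u)%ZZ.
    apply: minz_le; case/andP: hu => h1 h2; rewrite h1 /=.
    by case/andP: hv => _ h3; apply: leq_trans h3; apply: ltnW.
  by have := hfirst u hu; case: Z.eqb_spec => // hne _; lia.
split=> //.
apply/negPn/negP => hn; have c0 := cnt0 hn.
case/andP: hv => hv1 hva.
move: hv1; rewrite leq_eqVlt => /orP[/eqP hv1|hv1].
  have hAp : all (fun x => 0 < x) A by case/andP: hpA.
  have : bot p (vF p) = (Z.of_nat (size A) - Z.of_nat (size B))%ZZ.
    rewrite /bot /= -hv1 -cgeS.
    have -> : cge A 2 = size A.
      by rewrite -(cge_pos (v:=1) hAp) // (cge_split A 1) hv1 c0 addn0.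
    by rewrite cge_pos.
  move/leP: hsz; rewrite -?plusE; lia.
have := hgt (vF p).-1.
move: hv1 hbv c0; case: (vF p) => [|u] //= hu hbv c0.
rewrite ltnS in hu; rewrite hu ltnSn /= => /(_ isT) h.
have e1 : cgt A u = cgt A u.+1.
  by have -> : cgt A u = cge A u.+1 by []; rewrite cge_split c0 addn0.
have e2 : cge B u = cge B u.+1 + count_mem u B by rewrite cge_split.
move: h hbv; rewrite /bot /= e1 e2 -?plusE; lia.
Qed.

Lemma size_remS (x : nat) s : x \in s -> (size (rem x s)).+1 = size s.
Proof. by move=> h; rewrite (perm_size (perm_to_rem h)). Qed.

Lemma rem_sort_cons v A : sorted geq A -> rem v (sort geq (v :: A)) = A.
Proof.
move=> hA; apply: (sorted_eq geq_tr geq_asym) => //.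
  exact: (subseq_sorted geq_tr (rem_subseq _ _) (sort_sorted geq_tot _)).
apply/permP => P; rewrite count_rem count_sort mem_sort mem_head /=.
by rewrite addnC addnK.
Qed.

Lemma sort_cons_rem v B : sorted geq B -> v \in B -> sort geq (v :: rem v B) = B.
Proof.
move=> hB hv; apply: (sorted_eq geq_tr geq_asym) => //; first by apply: sort_sorted; exact: geq_tot.
by rewrite perm_sort perm_sym; apply: perm_to_rem.
Qed.

Lemma ep_props p : pv p -> (Mp p < 0)%ZZ ->
  [/\ pv (ep p), head 0 (ep p).1 = head 0 p.1, perm_eq ((ep p).1 ++ (ep p).2) (p.1 ++ p.2),
      size (ep p).1 = (size p.1).+1 & (size (ep p).2).+1 = size p.2 /\ fp (ep p) = p].
Proof.
move=> hp hM; have [a [A [B ep0]]] := pv_cons hp; subst p.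
have [hv hbv hgt hvB] := ep_spec hp hM.
have hpE := hp; rewrite pvE in hpE; case/and5P: hpE => hsA hpA hsB hpB hBa.
have hAa := sorted_le hsA.
have ha : 0 < a by case/andP: hpA.
move: hv hbv hgt hvB; rewrite /ep /=; set v := vE (a :: A, B) => hv hbv hgt hvB.
set M := Mp (a :: A, B) in hM hbv hgt.
set q := (a :: sort geq (v :: A), rem v B).
have hMq : Mp q = (M + 1)%ZZ.
  rewrite /Mp /=; apply: minz_char; first lia.
    move=> w hw; rewrite bot_ep //; have := minz_le hw (g:= bot (a :: A, B)); rewrite -/(Mp _) -/M.
    case: (ltngtP w v) => h; cbn iota; try lia.
      by have := hgt w; rewrite h; case/andP: hw => _ -> /(_ isT); lia.
  by right; exists v; split=> //; rewrite bot_ep // ltnn leqnn; lia.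
have hvF : vF q = v.
  rewrite /vF /= -/q.
  have [] := @firstv_spec (fun w => Z.eqb (bot q w) (Mp q)) a.
    by exists v; split=> //; apply/Z.eqb_eq; rewrite bot_ep // ltnn leqnn hMq; lia.
  set u := firstv _ a => hu /Z.eqb_eq hbu hfst.
  case: (ltngtP u v) => h //.
    move: hbu; rewrite bot_ep // h (ltnW h) hMq.
    have := minz_le (g:= bot (a :: A, B)) hu; rewrite -/(Mp _) -/M; lia.
  have := hfst v; case/andP: hv => -> _; rewrite h => /(_ isT) /negP; case.
  by apply/Z.eqb_eq; rewrite bot_ep // ltnn leqnn hMq; lia.
split.
- rewrite pvE; apply/and5P; split=> //=.
  + rewrite path_sortedE; last exact: geq_tr.
    rewrite all_sort /= (sort_sorted geq_tot) andbT; case/andP: hv => _ ->; exact: hAa.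
  + rewrite ha all_sort /=; case/andP: hv => -> _; by case/andP: hpA.
  + exact: (subseq_sorted geq_tr (rem_subseq _ _) hsB).
  + exact: all_rem.
  + exact: all_rem.
- by [].
- apply/permP => P; rewrite /= !count_cat count_sort /= (permP (perm_to_rem hvB) P) /=; nlia.
- by rewrite /= size_sort.
- split; first exact: size_remS.
  by rewrite /fp hvF /= rem_sort_cons ?sort_cons_rem //; apply: (path_sorted hsA).
Qed.

Lemma fp_props p : pv p -> size p.2 + 3 <= size p.1 ->
  [/\ pv (fp p), head 0 (fp p).1 = head 0 p.1, perm_eq ((fp p).1 ++ (fp p).2) (p.1 ++ p.2),
      (size (fp p).1).+1 = size p.1 & [/\ size (fp p).2 = (size p.2).+1, (Mp (fp p) < 0)%ZZ
    & ep (fp p) = p]].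
Proof.
move=> hp hsz; have [a [A [B ep0]]] := pv_cons hp; subst p.
have hsz' : size B + 2 <= size A by rewrite /= addnS ltnS in hsz.
have [hv hbv hgt hvA] := fp_spec hp hsz'.
have hpE := hp; rewrite pvE in hpE; case/and5P: hpE => hsA hpA hsB hpB hBa.
have hAa := sorted_le hsA.
have ha : 0 < a by case/andP: hpA.
move: hv hbv hgt hvA; rewrite /fp /=; set v := vF (a :: A, B) => hv hbv hgt hvA.
set M := Mp (a :: A, B) in hbv hgt.
have hM0 : (M <= 0)%ZZ by apply: minz_le0.
set q := (a :: rem v A, sort geq (v :: B)).
have hMq : Mp q = (M - 1)%ZZ.
  rewrite /Mp /=; apply: minz_char; first lia.
    move=> w hw; rewrite bot_fp //; have := minz_le hw (g:= bot (a :: A, B)); rewrite -/(Mp _) -/M.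
    case: (ltngtP w v) => h; cbn iota; try lia.
      by have := hgt w; rewrite h; case/andP: hw => -> _ /(_ isT); lia.
  by right; exists v; split=> //; rewrite bot_fp // ltnn leqnn; lia.
have hvE : vE q = v.
  rewrite /vE /= -/q.
  have [] := @lastv_spec (fun w => Z.eqb (bot q w) (Mp q)) a.
    by exists v; split=> //; apply/Z.eqb_eq; rewrite bot_fp // ltnn leqnn hMq; lia.
  set u := lastv _ a => hu /Z.eqb_eq hbu hlst.
  case: (ltngtP u v) => h //.
    have := hlst v; case/andP: hv => _ ->; rewrite h => /(_ isT) /negP; case.
    by apply/Z.eqb_eq; rewrite bot_fp // ltnn leqnn hMq; lia.
  move: hbu; rewrite bot_fp // ltnNge (ltnW h) /= leqNgt h /= hMq.
  have := minz_le (g:= bot (a :: A, B)) hu; rewrite -/(Mp _) -/M; lia.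
split.
- rewrite pvE; apply/and5P; split=> //=.
  + rewrite path_sortedE; last exact: geq_tr.
    rewrite all_rem //= (subseq_sorted geq_tr (rem_subseq _ _) (path_sorted hsA)) //.
  + by rewrite ha all_rem //; case/andP: hpA.
  + by apply: sort_sorted; exact: geq_tot.
  + by rewrite all_sort /= hpB; case/andP: hv => ->.
  + by rewrite all_sort /= hBa; case/andP: hv => _ ->.
- by [].
- apply/permP => P; rewrite /= !count_cat count_sort /= (permP (perm_to_rem hvA) P) /=; nlia.
- by rewrite /= size_remS.
split.
- by rewrite /= size_sort.
- by rewrite hMq; lia.
- by rewrite /ep hvE /= rem_sort_cons ?sort_cons_rem //; apply: (path_sorted hsA).
Qed.

Lemma Mp0 p : (Mp p = 0)%ZZ <-> (forall w, 1 <= w <= head 0 p.1 -> (0 <= bot p w)%ZZ).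
Proof.
split=> [h w hw|h]; first by rewrite -h; apply: minz_le.
apply: minz_char => //; first lia.
Qed.

Lemma ss_iff p : pv p -> strict_shifted p.1 p.2 <-> (Mp p = 0)%ZZ.
Proof.
move=> hp; have [a [A [B ep0]]] := pv_cons hp; subst p.
have hpE := hp; rewrite pvE in hpE; case/and5P: hpE => hsA hpA hsB hpB hBa.
have hsA' := path_sorted hsA.
rewrite Mp0 /strict_shifted /=; split.
  case/andP=> hsz /allP hj w /andP[hw1 hwa].
  rewrite /bot /=; suff : cge B w <= cgt A w by move/leP; lia.
  case: w hw1 hwa => [|u] // _ hua; rewrite cgeS.
  case hc: (cgt B u) => [|c] //.
  have hc1 : c < cgt B u by rewrite hc.
  rewrite cgt_nth // in hc1.
  have hcB : c < size B.
    by apply: leq_trans (count_size (fun x => u < x) B); rewrite -/(cgt B u) hc.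
  have := hj c; rewrite mem_iota add0n hcB => /(_ isT) hlt.
  by rewrite cgt_nth //; apply: leq_ltn_trans hlt.
move=> h.
have key : forall j, j < size B -> j < cgt A (nth 0 B j) /\ nth 0 B j < nth 0 A j.
  move=> j hj; have hx := mem_nth 0 hj.
  have hx1 : 0 < nth 0 B j := allP hpB _ hx.
  have hxa : nth 0 B j <= a := allP hBa _ hx.
  have := h (nth 0 B j); rewrite hx1 hxa /= => /(_ isT); rewrite /bot /=.
  move: hx1; case e: (nth 0 B j) => [|u] // _; rewrite cgeS => hle.
  have hju : j < cgt B u by rewrite cgt_nth // e.
  have hjA : j < cgt A u.+1 by apply: (leq_trans hju); apply/leP; lia.
  by split=> //; rewrite -cgt_nth.
apply/andP; split.
  case: (size B) key => [|s] // key; rewrite ltnS.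
  have [h1 _] := key s (ltnSn s); apply: leq_trans h1 _; exact: count_size.
by apply/allP => j; rewrite mem_iota add0n => /= hj; have [_ ->] := key j hj.
Qed.

Fixpoint red (c : nat) (p : vpair) : nat * vpair :=
  if c is c'.+1 then
    (if Z.ltb (Mp p) Z0 then let r := red c' (ep p) in (r.1.+1, r.2) else (0, p))
  else (0, p).

Lemma Mp_le0 p : (Mp p <= 0)%ZZ. Proof. exact: minz_le0. Qed.

Lemma red_spec c p : pv p -> size p.2 <= c ->
  [/\ pv (red c p).2, head 0 (red c p).2.1 = head 0 p.1,
      perm_eq ((red c p).2.1 ++ (red c p).2.2) (p.1 ++ p.2), Mp (red c p).2 = 0%ZZ
    & [/\ size (red c p).2.1 = size p.1 + (red c p).1, size (red c p).2.2 + (red c p).1 = size p.2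
        & iter (red c p).1 fp (red c p).2 = p]].
Proof.
elim: c p => [|c IH] p hp hc /=.
  case: (Z.ltb_spec (Mp p) Z0) => hM.
    have [_ _ _ _ [h _]] := ep_props hp hM; by move: hc; rewrite -h.
  by split=> //; [have := @Mp_le0 p; lia | split; rewrite ?addn0].
case: (Z.ltb_spec (Mp p) Z0) => hM /=; last first.
  by split=> //; [have := @Mp_le0 p; lia | split; rewrite ?addn0].
have [hp' hh hperm hs1 [hs2 hfe]] := ep_props hp hM.
have hc' : size (ep p).2 <= c by rewrite -ltnS hs2.
have [h1 h2 h3 h4 [h5 h6 h7]] := IH _ hp' hc'.
split=> //.
- exact: perm_trans h3 hperm.
split.
- by rewrite h5 hs1 addSn addnS.
- by rewrite addnS -hs2 h6.
- by rewrite /= h7.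
Qed.

Lemma iter_fp t q : pv q -> size q.2 + 2 * t + 1 <= size q.1 ->
  [/\ pv (iter t fp q), head 0 (iter t fp q).1 = head 0 q.1,
      perm_eq ((iter t fp q).1 ++ (iter t fp q).2) (q.1 ++ q.2),
      size (iter t fp q).1 + t = size q.1
    & [/\ size (iter t fp q).2 = size q.2 + t, (0 < t)%N -> (Mp (iter t fp q) < 0)%ZZ
        & Mp q = 0%ZZ -> forall c, size (iter t fp q).2 <= c -> red c (iter t fp q) = (t, q)]].
Proof.
elim: t => [|t IH] hq hsz.
  split=> //; first by rewrite addn0.
  split=> //; first by rewrite addn0.
  move=> h0 [|c] _ //=; by rewrite h0.
have hsz' : size q.2 + 2 * t + 1 <= size q.1.
  by apply: leq_trans hsz; rewrite leq_add2r leq_add2l leq_mul2l ltnW.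
have [h1 h2 h3 h4 [h5 h6 h7]] := IH hq hsz'.
have hx : size (iter t fp q).2 + 3 <= size (iter t fp q).1.
  apply/leP; move/leP: hsz; move: h4 h5; rewrite -?plusE -?multE; lia.
have [g1 g2 g3 g4 [g5 g6 g7]] := fp_props h1 hx.
rewrite iterS; split=> //.
- exact: perm_trans g3 h3.
- by rewrite addnS -addSn g4 h4.
split=> //.
- by rewrite g5 h5 addnS.
- move=> h0 [|c]; rewrite g5 // ltnS => hc /=.
  case: (Z.ltb_spec (Mp (fp (iter t fp q))) Z0) => hM /=; last lia.
  by rewrite g7 (h7 h0 c hc).
Qed.

Import GRing.Theory Num.Theory.

Lemma rank_eq (x y m : nat) : ((Posz x - Posz y - 1)%R == Posz m) = (x == y + m + 1).
Proof. rewrite !subr_eq -!PoszD eqz_nat. apply/eqP/eqP => h; rewrite h; nlia. Qed.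

Notation dp := (([::], [::]) : seq nat * seq nat).

Lemma nth_mapiota (T : Type) (d : T) (f : nat -> T) k i : i < k -> nth d (map f (iota 0 k)) i = f i.
Proof. by move=> h; rewrite (nth_map 0) ?size_iota // nth_iota. Qed.

Lemma kD_pv k n D v i : is_kDurfee k n (D, v) -> i < k.-1 -> pv (nth dp v i).
Proof.
case/andP => /eqP hsz /and5P [hpart _ h1 _ _] hi.
have hik : i < size v by rewrite hsz; apply: leq_trans hi (leq_pred k).
have := allP h1 i; rewrite mem_iota add0n hi => /(_ isT) /andP [hne hb].
have := allP hpart _ (mem_nth dp hik) => /andP [p1 p2].
by rewrite /pv p1 p2 hne hb.
Qed.

Lemma kD_transfer k n D v v' : 0 < k -> is_kDurfee k n (D, v) -> size v' = k ->
  (forall i, i < k.-1 -> [/\ pv (nth dp v' i), head 0 (nth dp v' i).1 = head 0 (nth dp v i).1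
       & perm_eq ((nth dp v' i).1 ++ (nth dp v' i).2) ((nth dp v i).1 ++ (nth dp v i).2)]) ->
  nth dp v' k.-1 = nth dp v k.-1 -> is_kDurfee k n (D, v').
Proof.
move=> hk hD hs' hi hlast; move: (hD); case/andP => /eqP hsz /and5P [hpart hsum h1 h2 h3].
have hlastk : forall i, i < k -> k.-1 <= i -> i = k.-1.
  by move=> i h1' h2'; apply/eqP; rewrite eqn_leq h2' andbT -ltnS prednK.
have hperm : forall i, i < k -> perm_eq ((nth dp v' i).1 ++ (nth dp v' i).2) ((nth dp v i).1 ++ (nth dp v i).2).
  move=> i hik; case: (ltnP i k.-1) => h; first by case: (hi i h).
  by rewrite (hlastk i hik h) hlast.
apply/andP; split; first by rewrite hs'.
apply/and5P; split.
- apply/allP => x /(nthP dp) [i hik <-]; rewrite hs' in hik.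
  case: (ltnP i k.-1) => h; first by case: (hi i h) => /and4P [] -> -> _ _ _ _.
  rewrite (hlastk i hik h) hlast; apply: (allP hpart); apply: mem_nth; rewrite hsz prednK //.
- have -> : [seq sumn p.1 + sumn p.2 | p <- v'] = [seq sumn p.1 + sumn p.2 | p <- v] => //.
  apply: (@eq_from_nth _ 0); rewrite !size_map ?hs' ?hsz // => i hik.
  by rewrite !(nth_map dp) ?hs' ?hsz // -!sumn_cat; apply: perm_sumn; apply: hperm.
- apply/allP => i; rewrite mem_iota add0n => hik /=.
  by case: (hi i hik) => /and4P [] _ _ -> -> _ _.
- apply/allP => i; rewrite mem_iota add1n => /andP [hi1 hik] /=.
  have hik' : i < k by rewrite -(prednK hk).
  have hi1' : i.-1 < k.-1 by rewrite -ltnS prednK.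
  have := allP h2 i; rewrite mem_iota add1n hi1 hik => /(_ isT) /=.
  rewrite /alphai /betai /lpart /=; case: (hi _ hi1') => _ -> _.
  by rewrite (perm_all _ (hperm i hik')).
- by move: h3; rewrite /alphai /betai /= hlast.
Qed.

Definition redv k (v : seq vpair) : seq vpair :=
  [seq (if i < k.-1 then (red (size (nth dp v i).2) (nth dp v i)).2 else nth dp v i) | i <- iota 0 k].
Definition tv k (v : seq vpair) : seq nat :=
  [seq (red (size (nth dp v i).2) (nth dp v i)).1 | i <- iota 0 k.-1].
Definition expv k (t : seq nat) (v : seq vpair) : seq vpair :=
  [seq (if i < k.-1 then iter (nth 0 t i) fp (nth dp v i) else nth dp v i) | i <- iota 0 k].
Definition redS k (s : symbol) : symbol := (s.1, redv k s.2).
Definition expS k t (s : symbol) : symbol := (s.1, expv k t s.2).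

Lemma hr_map k m s : size m = k -> has_ranks k [seq Posz x | x <- m] s =
  all (fun i => if i < k.-1 then size (alphai s i) == size (betai s i) + nth 0 m i + 1
                else rank k s i == Posz (nth 0 m i)) (iota 0 k).
Proof.
move=> hm; apply: eq_in_all => i; rewrite mem_iota add0n => hi.
rewrite (nth_map 0) ?hm //; case: ifP => h //.
by rewrite /rank h rank_eq.
Qed.

Lemma hr_shift k m t s : size m = k -> has_ranks k (shift_ranks k m t) s =
  all (fun i => if i < k.-1 then size (alphai s i) == size (betai s i) + (nth 0 m i + 2 * nth 0 t i) + 1
                else rank k s i == Posz (nth 0 m i)) (iota 0 k).
Proof.
move=> hm; apply: eq_in_all => i; rewrite mem_iota add0n => hi.
rewrite /shift_ranks nth_mkseq //; case: ifP => h //.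
by rewrite /rank h rank_eq.
Qed.

Lemma size_le_sumn l : all (fun x => 0 < x) l -> size l <= sumn l.
Proof.
elim: l => [|x l IH] //= /andP [hx hl].
by rewrite -add1n; apply: leq_add hx (IH hl).
Qed.

Lemma sumn_mem (T : eqType) (f : T -> nat) x l : x \in l -> f x <= sumn (map f l).
Proof.
elim: l => [|y l IH] //; rewrite in_cons => /orP [/eqP ->|h] /=; first exact: leq_addr.
by apply: leq_trans (IH h) _; apply: leq_addl.
Qed.

Lemma mem_iota0 i k : (i \in iota 0 k) = (i < k).
Proof. by rewrite mem_iota add0n. Qed.

Lemma rank_same k (s s' : symbol) i : alphai s i = alphai s' i -> betai s i = betai s' i ->
  rank k s i = rank k s' i.
Proof. by rewrite /rank => -> ->. Qed.

Lemma redS_ok k n m s : 0 < k -> size m = k -> is_kDurfee k n s ->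
  has_ranks k [seq Posz x | x <- m] s ->
  [/\ is_kDurfee k n (redS k s), is_strict_shifted k (redS k s),
      has_ranks k (shift_ranks k m (tv k s.2)) (redS k s), expS k (tv k s.2) (redS k s) = s
    & all (fun x => x <= n) (tv k s.2)].
Proof.
case: s => D v hk hm hD hr.
have hsz : size v = k by case/andP: hD => /eqP.
set r := fun i => red (size (nth dp v i).2) (nth dp v i).
have hred : forall i, i < k.-1 -> _ := fun i hi => red_spec (kD_pv hD hi) (leqnn _).
have hik : forall i, i < k.-1 -> i < k by move=> i hi; apply: leq_trans hi (leq_pred k).
have hkk : k.-1 < k by rewrite prednK.
have hnth : forall i, i < k -> nth dp (redv k v) i = if i < k.-1 then (r i).2 else nth dp v i.
  by move=> i hi; rewrite /redv nth_mapiota.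
have htv : forall i, i < k.-1 -> nth 0 (tv k v) i = (r i).1.
  by move=> i hi; rewrite /tv nth_mapiota.
rewrite hr_map // in hr.
split.
- apply: (kD_transfer hk hD); first by rewrite size_map size_iota.
    by move=> i hi; rewrite hnth ?hik // hi; case: (hred i hi).
  by rewrite hnth // ltnn.
- apply/allP => i; rewrite mem_iota0 => hi.
  rewrite /alphai /betai /= hnth ?hik // hi.
  by case: (hred i hi) => hp _ _ h0 _; apply/(ss_iff hp).
- rewrite hr_shift //; apply/allP => i hi.
  have := allP hr i hi; move: hi; rewrite mem_iota0 => hi.
  case: ifP => hik'.
    rewrite /alphai /betai /= hnth // hik' htv //.
    case: (hred i hik') => _ _ _ _ [h5 h6 _]; rewrite -/(r i) in h5 h6.
    move=> /eqP e; apply/eqP; move: h5 h6 e; nlia.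
  by rewrite (rank_same k (i:=i) (s:=(D, redv k v)) (s':=(D,v))) // /alphai /betai /= hnth // hik'.
- rewrite /expS /=; congr (_, _).
  apply: (@eq_from_nth _ dp); first by rewrite size_map size_iota hsz.
  move=> i; rewrite size_map size_iota => hi; rewrite /expv nth_mapiota //.
  case: ifP => hik'; last by rewrite hnth // hik'.
  by rewrite hnth // hik' htv //; case: (hred i hik') => _ _ _ _ [_ _ ->].
- apply/allP => x /mapP [i]; rewrite mem_iota0 => hi ->.
  case: (hred i hi) => _ _ _ _ [_ h6 _].
  have hik' := hik i hi.
  have hin : nth dp v i \in v by apply: mem_nth; rewrite hsz.
  have hpv := kD_pv hD hi; case/andP: hpv => _ /andP [hp2 _].
  apply: (leq_trans (n := size (nth dp v i).2)).
  by rewrite /= -[X in _ <= X]h6 leq_addl.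
  apply: (leq_trans (size_le_sumn (proj2 (andP hp2)))).
  case/andP: hD => _ /and3P [_ /eqP hs _].
  rewrite -hs; apply: leq_trans (leq_addr _ _).
  apply: leq_trans (sumn_mem (fun p => sumn p.1 + sumn p.2) hin); exact: leq_addl.
Qed.

Lemma expS_ok k n m tl y : 0 < k -> size m = k -> size tl = k.-1 -> is_kDurfee k n y ->
  is_strict_shifted k y -> has_ranks k (shift_ranks k m tl) y ->
  [/\ is_kDurfee k n (expS k tl y), has_ranks k [seq Posz x | x <- m] (expS k tl y),
      tv k (expS k tl y).2 = tl & redS k (expS k tl y) = y].
Proof.
case: y => D v hk hm ht hD hss hr.
have hsz : size v = k by case/andP: hD => /eqP.
have hik : forall i, i < k.-1 -> i < k by move=> i hi; apply: leq_trans hi (leq_pred k).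
have hkk : k.-1 < k by rewrite prednK.
rewrite hr_shift // in hr.
have hit : forall i, i < k.-1 -> _ := fun i hi =>
  @iter_fp (nth 0 tl i) (nth dp v i) (kD_pv hD hi).
have hq : forall i, i < k.-1 -> pv (nth dp v i) /\ Mp (nth dp v i) = 0%ZZ /\
   size (nth dp v i).1 = size (nth dp v i).2 + (nth 0 m i + 2 * nth 0 tl i) + 1.
  move=> i hi; have hp := kD_pv hD hi; split=> //; split.
    by apply/(ss_iff hp); have := allP hss i; rewrite mem_iota0 hi => /(_ isT).
  by have := allP hr i; rewrite mem_iota0 (hik i hi) hi => /(_ isT) /eqP.
have hbound : forall i, i < k.-1 -> size (nth dp v i).2 + 2 * nth 0 tl i + 1 <= size (nth dp v i).1.
  move=> i hi; case: (hq i hi) => _ [_ ->]; apply/leP; nlia.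
have hit' : forall i, i < k.-1 -> _ := fun i hi => hit i hi (hbound i hi).
have hnth : forall i, i < k -> nth dp (expv k tl v) i =
    if i < k.-1 then iter (nth 0 tl i) fp (nth dp v i) else nth dp v i.
  by move=> i hi; rewrite /expv nth_mapiota.
split.
- apply: (kD_transfer hk hD); first by rewrite size_map size_iota.
    by move=> i hi; rewrite hnth ?hik // hi; case: (hit' i hi).
  by rewrite hnth // ltnn.
- rewrite hr_map //; apply/allP => i hi.
  have := allP hr i hi; move: hi; rewrite mem_iota0 => hi.
  case: ifP => hik'.
    rewrite /alphai /betai /= hnth // hik'.
    case: (hit' i hik') => _ _ _ h4 [h5 _ _].
    move=> /eqP e; apply/eqP; move: h4 h5 e; nlia.
  by rewrite (rank_same k (i:=i) (s:=(D, expv k tl v)) (s':=(D,v))) // /alphai /betai /= hnth // hik'.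
- apply: (@eq_from_nth _ 0); first by rewrite size_map size_iota ht.
  move=> i; rewrite size_map size_iota => hi; rewrite /tv nth_mapiota //= hnth ?hik // hi.
  case: (hit' i hi) => _ _ _ _ [_ _ h7].
  by case: (hq i hi) => _ [h0 _]; rewrite (h7 h0 _ (leqnn _)).
- rewrite /redS /=; congr (_, _).
  apply: (@eq_from_nth _ dp); first by rewrite size_map size_iota hsz.
  move=> i; rewrite size_map size_iota => hi; rewrite /redv nth_mapiota //.
  case: ifP => hik'; last by rewrite hnth // hik'.
  rewrite hnth // hik'; case: (hit' i hik') => _ _ _ _ [_ _ h7].
  by case: (hq i hik') => _ [h0 _]; rewrite (h7 h0 _ (leqnn _)).
Qed.

Lemma count_bij (T : eqType) (U : seq T) (P Q : pred T) (g h : T -> T) :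
  (forall x, P x -> x \in U) -> (forall y, Q y -> y \in U) ->
  (forall x, P x -> Q (g x) /\ h (g x) = x) -> (forall y, Q y -> P (h y) /\ g (h y) = y) ->
  size (undup (filter P U)) = size (undup (filter Q U)).
Proof.
move=> cP cQ hPQ hQP; set lP := undup (filter P U).
have memP : forall x, (x \in lP) = P x.
  move=> x; rewrite mem_undup mem_filter; case Px: (P x) => //=; exact: cP.
have memQ : forall x, (x \in undup (filter Q U)) = Q x.
  move=> x; rewrite mem_undup mem_filter; case Qx: (Q x) => //=; exact: cQ.
rewrite -(size_map g); apply: perm_size; apply: uniq_perm.
- rewrite map_inj_in_uniq ?undup_uniq // => x y; rewrite !memP => hx hy e.
  by rewrite -(proj2 (hPQ x hx)) e (proj2 (hPQ y hy)).
- exact: undup_uniq.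
move=> z; rewrite memQ; apply/mapP/idP => [[x hx ->]|hz].
  by rewrite memP in hx; case: (hPQ x hx).
by case: (hQP z hz) => h1 h2; exists (h z) => //; rewrite memP.
Qed.

Lemma size_partition (T : Type) (I : finType) (key : T -> I) (l : seq T) :
  size l = \sum_(t : I) count (fun x => key x == t) l.
Proof.
elim: l => [|x l IH] /=; first by rewrite big1.
rewrite big_split /= -IH -add1n; congr (_ + _).
rewrite (eq_bigr (fun t => if t == key x then 1 else 0)); last first.
  by move=> t _; rewrite eq_sym; case: (t == key x).
by rewrite -big_mkcond big_pred1_eq.
Qed.

Lemma leq_sq D : D <= D ^ 2.
Proof. by case: D => // D; rewrite expnS expn1 leq_pmull. Qed.

Lemma seqs_len_mem l n : all (fun x => 0 < x <= n) l -> l \in seqs_len (size l) n.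
Proof.
elim: l => [|x l IH] //= /andP [hx hl].
apply: (allpairs_f (fun x t => x :: t)); last exact: IH.
by rewrite mem_iota add1n ltnS.
Qed.

Lemma cand_parts_mem l n : is_partition l -> sumn l <= n -> l \in cand_parts n.
Proof.
case/andP=> _ hp hs; apply/flattenP; exists (seqs_len (size l) n).
  apply/mapP; exists (size l) => //; rewrite mem_iota0 ltnS.
  exact: leq_trans (size_le_sumn hp) hs.
apply: seqs_len_mem; apply/allP => x hx; rewrite (allP hp x hx) /=.
apply: leq_trans hs; have := sumn_mem id hx; by rewrite map_id.
Qed.

Lemma cand_vecs_mem k n v : size v = k ->
  all (fun p => (p.1 \in cand_parts n) && (p.2 \in cand_parts n)) v -> v \in cand_vecs k n.
Proof.
elim: v k => [|p v IH] [|k] // [hk] /andP [hp hv].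
apply: (allpairs_f (fun p w => p :: w)); last exact: IH.
case: p hp => a b /andP [ha hb]; exact: (allpairs_f (fun a b => (a, b))).
Qed.

Lemma kD_cand k n s : is_kDurfee k n s -> s \in cand_symbols k n.
Proof.
case: s => D v; case/andP => /eqP hsz /and5P [hpart /eqP hsum _ _ _].
apply: (allpairs_f (fun D v => (D, v))).
  rewrite mem_iota0 ltnS; apply: leq_trans (leq_sq D) _; rewrite -hsum; exact: leq_addl.
apply: cand_vecs_mem => //; apply/allP => p hp.
have := allP hpart p hp => /andP [h1 h2].
have hs : sumn p.1 + sumn p.2 <= n.
  rewrite -hsum; apply: leq_trans (leq_addr _ _).
  exact: (sumn_mem (fun p => sumn p.1 + sumn p.2) hp).
rewrite !cand_parts_mem //; [apply: leq_trans hs; exact: leq_addl | apply: leq_trans hs; exact: leq_addr].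
Qed.

Definition keyf k B' (s : symbol) : (k.-1).-tuple 'I_B'.+1 :=
  [tuple (inord (nth 0 (tv k s.2) i) : 'I_B'.+1) | i < k.-1].

Lemma size_tv k v : size (tv k v) = k.-1.
Proof. by rewrite size_map size_iota. Qed.

Lemma keyf_val k B' s : all (fun x => x < B'.+1) (tv k s.2) ->
  [seq val x | x <- keyf k B' s] = tv k s.2.
Proof.
move=> hb; apply: (@eq_from_nth _ 0); first by rewrite size_map size_tuple size_tv.
move=> i; rewrite size_map size_tuple => hi.
rewrite (nth_map ord0) ?size_tuple // -(tnth_nth ord0 _ (Ordinal hi)) tnth_mktuple /=.
by rewrite inordK //; apply: (allP hb); apply: mem_nth; rewrite size_tv.
Qed.

Lemma keyf_eq k B' s (t : (k.-1).-tuple 'I_B'.+1) :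
  tv k s.2 = [seq val x | x <- t] -> keyf k B' s = t.
Proof.
move=> e; have hb : all (fun x => x < B'.+1) (tv k s.2).
  by rewrite e; apply/allP => x /mapP [y _ ->]; exact: ltn_ord.
apply: val_inj; apply: (inj_map val_inj); by rewrite /= keyf_val // e.
Qed.

Theorem mainTheorem8 (k n : nat) (m : seq nat) :
  2 <= k -> size m = k ->
  exists B0 : nat, forall B : nat, B0 <= B ->
    Dk k [seq Posz x | x <- m] n =
    (\sum_(t : (k.-1).-tuple 'I_B) Dss k (shift_ranks k m [seq val x | x <- t]) n)%N.
Proof.
move=> hk hm; exists n.+1 => B hB.
case: B hB => [//|B'] hB.
have hk0 : 0 < k by apply: leq_trans hk.
rewrite /Dk /Dss [LHS](size_partition (keyf k B')).
apply: eq_bigr => t _.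
rewrite -size_filter filter_undup -filter_predI.
apply: (count_bij (g := redS k) (h := expS k [seq val x | x <- t])).
- by move=> x /andP [_ /andP [hx _]]; exact: kD_cand hx.
- by move=> y /and3P [hy _ _]; exact: kD_cand.
- move=> x /andP [/eqP hkey /andP [hD hr]].
  have [h1 h2 h3 h4 h5] := redS_ok hk0 hm hD hr.
  have hb : all (fun x => x < B'.+1) (tv k x.2).
    by apply/allP => y hy; apply: leq_ltn_trans (allP h5 y hy) hB.
  have e : [seq val x | x <- t] = tv k x.2 by rewrite -hkey keyf_val.
  by rewrite e; split=> //; apply/and3P.
- move=> y /and3P [hD hss hr].
  have hst : size [seq val x | x <- t] = k.-1 by rewrite size_map size_tuple.
  have [h1 h2 h3 h4] := expS_ok hk0 hm hst hD hss hr.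
  split=> //; apply/andP; split; last by apply/andP.
  by apply/eqP; apply: keyf_eq; rewrite h3.
Qed.
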